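(* Let $p$ be a prime and let $R$ be a local nearring which is not a nearfield, whose additive group is $G_3=\langle a\rangle+\langle b\rangle$ with $ap^2=0$, $bp=0$, $a+b=b+a$, and suppose $a$ is the identity element of $R$. Write $x=ax_1+bx_2$ ($0\le x_1<p^2$, $0\le x_2<p$) and define $\alpha\colon R\to\mathbb Z_{p^2}$, $\beta\colon R\to\mathbb Z_p$ by $xb=a\alpha(x)+b\beta(x)$. Then for $x=ax_1+bx_2$, $y=ay_1+by_2$, $$xy=a(x_1y_1+\alpha(x)y_2)+b(x_2y_1+\beta(x)y_2),$$ and moreover: (0) $\alpha(0)=\beta(0)=0$ if and only if $R$ is zero-symmetric; (1) $\alpha(a)=0$ and $\beta(a)=1$; (2) $\alpha(x)\equiv0\pmod p$; (3) $\alpha(xy)\equiv x_1\alpha(y)+\alpha(x)\beta(y)\pmod p$; (4) $\beta(xy)\equiv x_2\alpha(y)+\beta(x)\beta(y)\pmod p$.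
   Context: A (left) nearring is a set $R$ with operations $+,\cdot$ such that $(R,+)$ is a group with neutral element $0$, $(R,\cdot)$ a semigroup, and $x(y+z)=xy+xz$ for all $x,y,z$. A nearring with identity is local if its non-invertible elements form a subgroup of $(R,+)$; a nearfield is a nearring with identity in which every nonzero element is invertible. $R$ is zero-symmetric if $0\cdot x=0$ for all $x$. Additive notation: $gk$ is $g$ added $k$ times. *)

(* Defs.v *)
From HB Require Import structures.
From mathcomp Require Import all_boot all_order all_algebra.
Set Implicit Arguments. Unset Strict Implicit. Unset Printing Implicit Defensive.
Import GRing.Theory.
Local Open Scope ring_scope.

(* The additive group G_3 = <a> + <b>, a p^2 = 0, b p = 0, a + b = b + a,
   realised concretely as Z_{p^2} x Z_p (p prime, so both moduli are >= 2). *)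
Definition G3 (p : nat) : Type := ('Z_(p ^ 2) * 'Z_p)%type.

Definition gzero (p : nat) : G3 p := (0, 0).
Definition gadd (p : nat) (x y : G3 p) : G3 p := (x.1 + y.1, x.2 + y.2).
Definition gopp (p : nat) (x : G3 p) : G3 p := (- x.1, - x.2).

Definition ga (p : nat) : G3 p := (1, 0).
Definition gb (p : nat) : G3 p := (0, 1).

Definition comb (p : nat) (k l : nat) : G3 p := (k%:R, l%:R).

Definition coord1 (p : nat) (x : G3 p) : nat := nat_of_ord x.1.
Definition coord2 (p : nat) (x : G3 p) : nat := nat_of_ord x.2.

Definition is_nearring (p : nat) (mul : G3 p -> G3 p -> G3 p) : Prop :=
  (forall x y z, mul x (mul y z) = mul (mul x y) z) /\
  (forall x y z, mul x (gadd y z) = gadd (mul x y) (mul x z)).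

Definition is_identity (p : nat) (mul : G3 p -> G3 p -> G3 p) (e : G3 p) : Prop :=
  forall x, mul e x = x /\ mul x e = x.

Definition invertible (p : nat) (mul : G3 p -> G3 p -> G3 p) (e x : G3 p) : Prop :=
  exists y, mul x y = e /\ mul y x = e.

(* local: the non-invertible elements form a subgroup of (R,+) *)
Definition is_local (p : nat) (mul : G3 p -> G3 p -> G3 p) (e : G3 p) : Prop :=
  is_identity mul e /\
  ~ invertible mul e (gzero p) /\
  (forall x y, ~ invertible mul e x -> ~ invertible mul e y ->
               ~ invertible mul e (gadd x (gopp y))).

Definition is_nearfield (p : nat) (mul : G3 p -> G3 p -> G3 p) (e : G3 p) : Prop :=
  is_identity mul e /\ (forall x, x <> gzero p -> invertible mul e x).

Definition zero_symmetric (p : nat) (mul : G3 p -> G3 p -> G3 p) : Prop :=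
  forall x, mul (gzero p) x = gzero p.

Definition alpha (p : nat) (mul : G3 p -> G3 p -> G3 p) (x : G3 p) : 'Z_(p ^ 2) :=
  (mul x (gb p)).1.
Definition beta (p : nat) (mul : G3 p -> G3 p -> G3 p) (x : G3 p) : 'Z_p :=
  (mul x (gb p)).2.

(* Main.v *)
Require Import Defs.
From mathcomp Require Import all_boot all_order all_algebra.
Import GRing.Theory.
Set Implicit Arguments. Unset Strict Implicit.
Local Open Scope ring_scope.

Definition gmul (p : nat) (y : G3 p) (k : nat) : G3 p := ((y.1 *+ k)%R, (y.2 *+ k)%R).

Lemma mul_x0 (p : nat) (mul : G3 p -> G3 p -> G3 p) :
  is_nearring mul -> forall x, mul x (gzero p) = gzero p.
Proof.
move=> [_ Hd] x.
have := Hd x (gzero p) (gzero p).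
rewrite /gadd /gzero /= !addr0.
case: (mul x (0%R, 0%R)) => u v [] Hu Hv.
congr pair.
- by apply: (@addrI _ u); rewrite addr0 -Hu.
- by apply: (@addrI _ v); rewrite addr0 -Hv.
Qed.

Lemma mul_xMn (p : nat) (mul : G3 p -> G3 p -> G3 p) :
  is_nearring mul -> forall x y k, mul x (gmul y k) = gmul (mul x y) k.
Proof.
move=> H x y; elim=> [|k IH].
  by rewrite /gmul /= !mulr0n; exact: (mul_x0 H).
have -> : gmul y k.+1 = gadd y (gmul y k) by rewrite /gmul /gadd !mulrS.
by rewrite (proj2 H) IH /gmul /gadd /= !mulrS.
Qed.

Lemma formula (p : nat) (mul : G3 p -> G3 p -> G3 p) :
  is_nearring mul -> is_identity mul (ga p) ->
  forall x y : G3 p,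
      mul x y =
      comb p (coord1 x * coord1 y + nat_of_ord (alpha mul x) * coord2 y)%N
             (coord2 x * coord1 y + nat_of_ord (beta mul x) * coord2 y)%N.
Proof.
move=> H Hid x y.
have D : y = gadd (gmul (ga p) (coord1 y)) (gmul (gb p) (coord2 y)).
  case: y => y1 y2; rewrite /gadd /gmul /ga /gb /coord1 /coord2 /=.
  by rewrite !mul0rn addr0 add0r !natr_Zp.
have E : mul x y = gadd (gmul x (coord1 y)) (gmul (mul x (gb p)) (coord2 y)).
  by rewrite {1}D (proj2 H) !(mul_xMn H) (proj2 (Hid x)).
rewrite E /gadd /gmul /comb /alpha /beta /coord1 /coord2.
by congr pair; rewrite natrD !natrM !mulr_natr !natr_Zp.
Qed.

Theorem lemma9 (p : nat) (mul : G3 p -> G3 p -> G3 p) :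
  prime p ->
  is_nearring mul ->
  is_local mul (ga p) ->
  ~ is_nearfield mul (ga p) ->
  (forall x y : G3 p,
      mul x y =
      comb p (coord1 x * coord1 y + nat_of_ord (alpha mul x) * coord2 y)%N
             (coord2 x * coord1 y + nat_of_ord (beta mul x) * coord2 y)%N) /\
  ((alpha mul (gzero p) = 0%R /\ beta mul (gzero p) = 0%R) <-> zero_symmetric mul) /\
  (alpha mul (ga p) = 0%R /\ beta mul (ga p) = 1%R) /\
  (forall x : G3 p, (p %| nat_of_ord (alpha mul x))%N) /\
  (forall x y : G3 p,
      nat_of_ord (alpha mul (mul x y)) =
      (coord1 x * nat_of_ord (alpha mul y) + nat_of_ord (alpha mul x) * nat_of_ord (beta mul y))%N
      %[mod p]) /\
  (forall x y : G3 p,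
      nat_of_ord (beta mul (mul x y)) =
      (coord2 x * nat_of_ord (alpha mul y) + nat_of_ord (beta mul x) * nat_of_ord (beta mul y))%N
      %[mod p]).
Proof.
move=> pr H [Hid _] _.
have p1 : (1 < p)%N by exact: prime_gt1.
have p21 : (1 < p ^ 2)%N by rewrite (ltn_exp2l 0) // ?p1.
have F := formula H Hid.
split; first exact: F.
split.
  split.
    move=> [Ha Hb] y; rewrite F Ha Hb /coord1 /coord2 /gzero /comb /=.
    by rewrite !mul0n !add0n.
  move=> Hz; rewrite /alpha /beta Hz /gzero /=; by [].
split.
  by rewrite /alpha /beta (proj1 (Hid (gb p))).
split.
  move=> x.
  have Hb : gmul (gb p) p = gzero p.
    rewrite /gmul /gb /gzero /= mul0rn; congr pair.
    by apply: val_inj; rewrite /= val_Zp_nat // modnn.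
  have := mul_xMn H x (gb p) p; rewrite Hb (mul_x0 H) /gmul.
  move/(congr1 fst) => /= /esym.
  move=> E.
  have E2 : ((alpha mul x * p)%N%:R : 'Z_(p ^ 2)) = 0.
    by rewrite natrM natr_Zp mulr_natr.
  move: (congr1 val E2); rewrite /= val_Zp_nat // => hd.
  have {}hd : (p ^ 2 %| alpha mul x * p)%N by rewrite /dvdn hd.
  have h2 : (p * p %| alpha mul x * p)%N by rewrite mulnn.
  by move: h2; rewrite dvdn_pmul2r // prime_gt0.
split.
  move=> x y; rewrite /alpha -(proj1 H) F /comb /coord1 /coord2 /=.
  by rewrite val_Zp_nat // modn_dvdm // dvdn_exp // .
move=> x y; rewrite /beta -(proj1 H) F /comb /coord1 /coord2 /=.
by rewrite val_Zp_nat // modn_mod.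
Qed.
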